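(* Let $L=E[C_1,\dots,C_n]$ be a congruence normal lattice. If $L$ is shellable, then for every $i\in[n]$ the convex subset $C_i$ intersects the spine of $E[C_1,\dots,C_{i-1}]$.
   Context: All lattices are finite. For a convex subset $C$ of a lattice $L$ (convex: $x,y\in C\Rightarrow[x,y]\subseteq C$), let $I_L(C)=\{y\in L\mid\exists x\in C,\ y\le x\}$, and the doubling $L[C]$ is the subposet of $L\times\{0<1\}$ on $\big(I_L(C)\times\{0\}\big)\sqcup\big(((L\setminus I_L(C))\cup C)\times\{1\}\big)$. $E[\,]$ is the one-element lattice and $E[C_1,\dots,C_{i+1}]:=E[C_1,\dots,C_i][C_{i+1}]$ with $C_{i+1}$ a nonempty convex subset of $E[C_1,\dots,C_i]$. The spine of a poset is the set of elements lying on some chain of maximum length. The order complex $\Delta(L)$ is the simplicial complex on $L$ whose faces are the chains of $L$; its facets are the maximal chains. $L$ is shellable if $\Delta(L)$ is shellable, i.e. its facets admit a linear order $F_1,\dots,F_k$ such that for each $1\le j<k$, the complex $\big(\bigcup_{i\le j}\langle F_i\rangle\big)\cap\langle F_{j+1}\rangle$ is pure of dimension $|F_{j+1}|-2$, where $\langle F\rangle$ is the set of all subsets of $F$. *)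

(* Defs.v *)
From mathcomp Require Import all_boot.
Set Implicit Arguments.
Unset Strict Implicit.
Unset Printing Implicit Defensive.

(** Carrier types of the iterated doublings: E[C_1,...,C_i] is a subposet of
    ((unit * bool) * bool) * ... * bool  (i factors bool), since
    L[C] is by definition a subposet of L x {0<1}. *)
Fixpoint Ty (n : nat) : finType :=
  match n with
  | 0 => unit
  | k.+1 => (Ty k * bool)%type
  end.

Fixpoint leT (n : nat) : rel (Ty n) :=
  match n return rel (Ty n) with
  | 0 => fun _ _ => true
  | k.+1 => fun (x y : (Ty k * bool)%type) => @leT k x.1 y.1 && (x.2 ==> y.2)
  end.

Section Posets.
Variables (T : finType) (le : rel T).

Definition convex (S C : {set T}) : Prop :=
  C \subset S /\
  forall x y z, x \in C -> y \in C -> z \in S -> le x z -> le z y -> z \in C.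

Definition downset (S C : {set T}) : {set T} :=
  [set y in S | [exists x in C, le y x]].

(** The doubling L[C], as a subset of L x {0<1} (carrying the product order). *)
Definition doubling (S C : {set T}) : {set (T * bool)%type} :=
  [set p | if p.2 then (p.1 \in S :\: downset S C) || (p.1 \in C)
           else p.1 \in downset S C].

(** chains of the poset (S, le) = faces of the order complex *)
Definition chain (S A : {set T}) : Prop :=
  A \subset S /\ forall x y, x \in A -> y \in A -> le x y || le y x.

(** maximal chains = facets of the order complex *)
Definition maxchain (S A : {set T}) : Prop :=
  chain S A /\ forall B, chain S B -> A \subset B -> B = A.

Definition maxlen_chain (S A : {set T}) : Prop :=
  chain S A /\ forall B, chain S B -> #|B| <= #|A|.

Definition spine (S : {set T}) (x : T) : Prop :=
  exists A, maxlen_chain S A /\ x \in A.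

(** A simplicial complex K (given as a predicate on faces) is pure of
    dimension d when every facet (inclusion-maximal face) has d+1 vertices;
    here dp1 = d + 1. *)
Definition pure_card (K : {set T} -> Prop) (dp1 : nat) : Prop :=
  forall G, K G -> (forall H, K H -> G \subset H -> H = G) -> #|G| = dp1.

(** Shelling of the order complex Delta(S): a linear order F_1,...,F_k of
    all facets (0-indexed here) such that for 1 <= j < k,
    (U_{i<=j} <F_i>) /\ <F_{j+1}> is pure of dimension |F_{j+1}| - 2. *)
Definition shelling (S : {set T}) (F : seq {set T}) : Prop :=
  uniq F /\ (forall A, A \in F <-> maxchain S A) /\
  forall j, 0 < j < size F ->
    pure_card (fun G => G \subset nth set0 F j /\
                        exists2 i, i < j & G \subset nth set0 F i)
              (#|nth set0 F j| - 1).

Definition shellable (S : {set T}) : Prop := exists F, shelling S F.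

End Posets.

(** E[C_0, ..., C_{n-1}] (0-indexed: C i is doubled in the i-th stage). *)
Fixpoint stage (C : forall i : nat, {set Ty i}) (n : nat) : {set Ty n} :=
  match n return {set Ty n} with
  | 0 => [set: Ty 0]
  | k.+1 => doubling (@leT k) (stage C k) (C k)
  end.

(* Main.v *)
Require Import Defs.
From mathcomp Require Import all_boot zify.
From Stdlib Require Import Classical.
Set Implicit Arguments. Unset Strict Implicit. Unset Printing Implicit Defensive.



Lemma leT_refl n : reflexive (@leT n).
Proof. by elim: n => [|n IH] x //=; rewrite IH implybb. Qed.

Lemma leT_trans n x y z : @leT n x y -> leT y z -> leT x z.
Proof.
elim: n x y z => [|n IH] x y z //= /andP[h1 h2] /andP[h3 h4].
rewrite (IH _ _ _ h1 h3) /=; move: h2 h4; by case: x.2; case: y.2; case: z.2.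
Qed.

Lemma leT_anti n x y : @leT n x y -> leT y x -> x = y.
Proof.
elim: n x y => [|n IH] x y /=; first by case: x; case: y.
case: x => x1 x2; case: y => y1 y2 /= /andP[h1 h2] /andP[h3 h4].
rewrite (IH _ _ h1 h3); congr pair; move: h2 h4; by case: x2; case: y2.
Qed.

Section Gen.
Variable k : nat.
Notation le := (@leT k).

Definition chainb (S A : {set Ty k}) :=
  (A \subset S) && [forall x in A, forall y in A, le x y || le y x].

Lemma chainP S A : reflect (chain le S A) (chainb S A).
Proof.
apply: (iffP andP) => -[h1 h2]; split => //.
- move=> x y xA yA. move/forallP: h2 => /(_ x); rewrite xA /= => /forallP/(_ y).
  by rewrite yA.
- apply/forallP => x; apply/implyP => xA; apply/forallP => y; apply/implyP => yA.
  exact: h2.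
Qed.

Lemma ext_max S A : chain le S A -> exists F, maxchain le S F /\ A \subset F.
Proof.
move=> /chainP hA.
pose P := fun B => chainb S B && (A \subset B).
have PA : P A by rewrite /P hA subxx.
case: (@arg_maxnP _ A P (fun B : {set Ty k} => #|B|) PA) => B /andP[hB AB] Bmax.
exists B; split => //; split; first exact/chainP.
move=> Bp /chainP hBp BBp. apply/eqP; rewrite eq_sym eqEcard BBp /=; apply: Bmax; rewrite /P hBp.
exact: (subset_trans AB BBp).
Qed.

Lemma ex_maxlen S : exists A, maxlen_chain le S A.
Proof.
have P0 : chainb S set0.
  rewrite /chainb sub0set; apply/forallP => x; by rewrite in_set0.
case: (@arg_maxnP _ set0 (chainb S) (fun B : {set Ty k} => #|B|) P0) => B hB Bmax.
exists B; split; first exact/chainP. move=> B' /chainP; exact: Bmax.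
Qed.

Variables (S C : {set Ty k}).
Notation D := (doubling le S C).
Notation I := (downset le S C).

Lemma inD x b : ((x, b) \in D) = if b then (x \in S :\: I) || (x \in C) else x \in I.
Proof. by rewrite inE. Qed.

Lemma downP y : reflect (y \in S /\ exists2 x, x \in C & le y x) (y \in I).
Proof.
rewrite inE; apply: (iffP andP) => -[h1 h2]; split => //.
  by case/existsP: h2 => x /andP[]; exists x.
by case: h2 => x xC lyx; apply/existsP; exists x; rewrite xC.
Qed.

Lemma down_closed x y : x \in S -> le x y -> y \in I -> x \in I.
Proof.
move=> xS lxy /downP[yS [c cC lyc]]; apply/downP; split => //.
by exists c => //; apply: leT_trans lxy lyc.
Qed.

Hypothesis CS : C \subset S.

Lemma inDS (u : Ty k.+1) : u \in D -> u.1 \in S.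
Proof.
case: u => x [] /=; rewrite inD; last by case/downP.
by case/orP => [|/(subsetP CS)//]; rewrite inE => /andP[].
Qed.

Lemma proj_chain (A : {set Ty k.+1}) : chain (@leT k.+1) D A -> chain le S (fst @: A).
Proof.
case=> sAD hA; split.
  apply/subsetP => _ /imsetP[u uA ->]; exact: inDS (subsetP sAD _ uA).
move=> _ _ /imsetP[u uA ->] /imsetP[v vA ->].
by case/orP: (hA u v uA vA) => /andP[h _]; apply/orP; [left|right].
Qed.

Lemma lift_chain A : chain le S A -> exists A' : {set Ty k.+1}, chain (@leT k.+1) D A' /\ fst @: A' = A.
Proof.
case=> sAS hA.
exists [set ((x, x \notin I) : Ty k.+1) | x in A]; split; last first.
  apply/setP => x; apply/imsetP/idP => [[y /imsetP[z zA ->] ->] //|xA].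
  by exists (x, x \notin I) => //; apply: imset_f.
split.
  apply/subsetP => _ /imsetP[x xA ->]; rewrite inD.
  case hx: (x \in I) => //=. by rewrite in_setD hx (subsetP sAS _ xA).
move=> _ _ /imsetP[x xA ->] /imsetP[y yA ->] /=.
have dc : forall a b, a \in A -> le a b -> (~~ (a \in I) ==> ~~ (b \in I)).
  move=> a b aA lab; apply/implyP => na; apply/negP => bI; move/negP: na; apply.
  exact: down_closed (subsetP sAS _ aA) lab bI.
case/orP: (hA x y xA yA) => h; first by rewrite h (dc x y xA h).
by rewrite h (dc y x yA h) orbT.
Qed.

Hypothesis cvx : forall x y z, x \in C -> y \in C -> z \in S -> le x z -> le z y -> z \in C.

Lemma add_max (F : {set Ty k.+1}) w : maxchain (@leT k.+1) D F -> w \in D ->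
  (forall u, u \in F -> @leT k.+1 u w || @leT k.+1 w u) -> w \in F.
Proof.
case=> [[sFD hF] Fmax] wD wc.
have ch : chain (@leT k.+1) D (w |: F).
  split.
    apply/subsetP => u; rewrite in_setU1 => /orP[/eqP->|] //; exact: (subsetP sFD).
  move=> u v; rewrite !in_setU1 => /orP[/eqP->|uF] /orP[/eqP->|vF].
  - by rewrite leT_refl.
  - by rewrite orbC; apply: wc.
  - exact: wc.
  - exact: hF.
have sub : F \subset w |: F by apply/subsetP => u uF; rewrite in_setU1 uF orbT.
rewrite -(Fmax _ ch sub); exact: setU11.
Qed.

Lemma proj_max (F : {set Ty k.+1}) : maxchain (@leT k.+1) D F -> maxchain le S (fst @: F).
Proof.
move=> hFm; have [[sFD hF] Fmax] := hFm; split; first exact: proj_chain.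
move=> B [sBS hB] sub; apply/eqP; rewrite eqEsubset sub andbT.
apply/subsetP => y yB; apply/negPn/negP => ny.
have yS : y \in S := subsetP sBS y yB.
have cmp (u : Ty k.+1) : u \in F -> le u.1 y || le y u.1.
  move=> uF; apply: hB => //; apply: (subsetP sub); exact: imset_f.
suff [w [wD w1 wc]] : exists w : Ty k.+1, [/\ w \in D, w.1 = y &
    forall u, u \in F -> @leT k.+1 u w || @leT k.+1 w u].
  move/negP: ny; apply; rewrite -w1; apply: imset_f; exact: add_max.
case yC: (y \in C).
- case ex: [exists z in F, ~~ z.2 && le y z.1].
  + exists (y,false); split => //.
      rewrite inD; apply/downP; split => //; exists y => //; exact: leT_refl.
    move=> [x b] uF /=. case lyx: (le y x); first by rewrite orbT.
    have := cmp _ uF; rewrite /= lyx orbF => lxy; rewrite lxy /=.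
    case: b uF => //= uF.
    move/existsP: ex => [[z bz] /andP[zF /andP[/= nbz lyz]]].
    move: (hF _ _ uF zF); rewrite /= (negbTE nbz) /= andbF /= andbT => lzx.
    by rewrite (leT_trans lyz lzx) in lyx.
  + exists (y,true); split => //; first by rewrite inD yC orbT.
    move=> [x b] uF /=. case lxy: (le x y); first by rewrite implybT.
    have := cmp _ uF; rewrite /= lxy /= => lyx; rewrite lyx /=.
    case: b uF => //= uF.
    by move/negbT/existsPn: ex => /(_ (x,false)); rewrite uF /= lyx.
- case yI: (y \in I).
  + exists (y,false); split => //; first by rewrite inD.
    move=> [x b] uF /=. case lyx: (le y x); first by rewrite orbT.
    have := cmp _ uF; rewrite /= lyx orbF => lxy; rewrite lxy /=.
    case: b uF => //= uF.
    have xD := subsetP sFD _ uF; rewrite inD in xD.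
    have xS : x \in S by case/orP: xD => [|/(subsetP CS)//]; rewrite inE => /andP[].
    have xI : x \in I := down_closed xS lxy yI.
    rewrite in_setD xI /= in xD.
    case/downP: yI => _ [c cC lyc].
    by move: (cvx xD cC yS lxy lyc); rewrite yC.
  + exists (y,true); split => //; first by rewrite inD in_setD yI yS.
    move=> [x b] uF /=. case lxy: (le x y); first by rewrite implybT.
    have := cmp _ uF; rewrite /= lxy /= => lyx; rewrite lyx /=.
    case: b uF => //= uF.
    have xD := subsetP sFD _ uF; rewrite inD in xD.
    case/downP: xD => _ [c cC lxc].
    suff : y \in I by rewrite yI.
    apply/downP; split => //; exists c => //.
    exact: leT_trans lyx lxc.
Qed.
Lemma vertical (F : {set Ty k.+1}) : maxchain (@leT k.+1) D F ->
  (exists2 u : Ty k.+1, u \in F & u.1 \in C) ->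
  exists c, [/\ c \in C, ((c,false) : Ty k.+1) \in F & ((c,true) : Ty k.+1) \in F].
Proof.
move=> hFm [u0 u0F u0C]; have [[sFD hF] _] := hFm.
have inS (y : Ty k) b : ((y,b) : Ty k.+1) \in F -> y \in S.
  by move=> yF; have := inDS (subsetP sFD _ yF).
have [c0 [c0C c0F]] : exists c, c \in C /\ ((c,false) : Ty k.+1) \in F.
  case: u0 u0F u0C => c b; case: b => u0F u0C; last by exists c.
  pose P (v : Ty k.+1) := (v \in F) && (v.1 \in C) && v.2.
  have Pu : P (c,true) by rewrite /P u0F u0C.
  case: (@arg_maxnP _ _ P (fun v => #|[set z in F | @leT k.+1 v z]|) Pu).
  move=> [c1 b1] /andP[/andP[v1F /= c1C]] /= b1T vmax.
  move: v1F vmax; rewrite b1T => v1F vmax.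
  exists c1; split => //. apply: add_max => //.
    rewrite inD; apply/downP; split; first exact: (subsetP CS).
    by exists c1 => //; apply: leT_refl.
  move=> [y b] yF /=; rewrite !andbT /=.
  have := hF _ _ yF v1F; rewrite /= implybT andbT.
  case: b yF => yF /=; rewrite ?andbT ?andbF ?orbF; last by move=> ->.
  case lcy: (le c1 y); first by rewrite orbT.
  rewrite orbF => lyc.
  have yC : y \in C.
    have := subsetP sFD _ yF; rewrite inD => /orP[|//].
    rewrite in_setD => /andP[/negP nI _]; exfalso; apply: nI.
    apply/downP; split; first exact: inS yF.
    by exists c1.
  have := vmax (y,true); rewrite /P yF yC => /(_ isT); rewrite leqNgt => /negP H; exfalso; apply: H.
  apply: proper_card; apply/properP; split.
    apply/subsetP => z; rewrite !inE => /andP[-> h]; rewrite andTb.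
    apply: (@leT_trans k.+1 (y,true) (c1,true) z); [by rewrite /= lyc | exact: h].
  exists (y,true); first by rewrite inE yF leT_refl.
  by rewrite inE yF /= lcy.
pose Q (v : Ty k.+1) := (v \in F) && (v.1 \in C) && ~~ v.2.
have Pu : Q (c0,false) by rewrite /Q c0F c0C.
case: (@arg_maxnP _ _ Q (fun v => #|[set z in F | @leT k.+1 z v]|) Pu).
move=> [c1 b1] /andP[/andP[v1F /= c1C]] /= b1T vmax.
move: v1F vmax; rewrite (negbTE b1T) => v1F vmax.
exists c1; split => //. apply: add_max => //.
  by rewrite inD c1C orbT.
move=> [y b] yF /=; rewrite implybT andbT.
have := hF _ _ yF v1F; rewrite /= andbT.
case lyc: (le y c1) => //=.
move=> lcy; rewrite lcy /=.
case: b yF => yF //=.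
have yC : y \in C.
  have := subsetP sFD _ yF; rewrite inD => /downP[yS [c cC lyc']].
  exact: cvx c1C cC yS lcy lyc'.
have := vmax (y,false); rewrite /Q yF yC => /(_ isT); rewrite leqNgt => /negP H; exfalso; apply: H.
apply: proper_card; apply/properP; split.
  apply/subsetP => z; rewrite !inE => /andP[-> h]; rewrite andTb.
  apply: (@leT_trans k.+1 z (c1,false) (y,false)); [exact: h | by rewrite /= lcy].
exists (y,false); first by rewrite inE yF leT_refl.
by rewrite inE yF /= lyc.
Qed.

End Gen.

Lemma shell_adj (k : nat) (S : {set Ty k}) Fl j : shelling (@leT k) S Fl -> 0 < j < size Fl ->
  exists2 i, i < j & #|nth set0 Fl j :&: nth set0 Fl i| = #|nth set0 Fl j| - 1.
Proof.
case=> _ [_ Hp] hj; have pc := Hp j hj; case/andP: hj => j0 jF.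
pose f (i : 'I_j) := #|nth set0 Fl j :&: nth set0 Fl i|.
pose i0 : 'I_j := Ordinal j0.
case: (@arg_maxnP _ i0 predT f isT) => im _ immax.
exists im => //. apply: pc.
  split; first exact: subsetIl. by exists im => //; exact: subsetIr.
move=> H [HFk [i' i'k Hi']] sub. apply/eqP; rewrite eq_sym eqEcard sub /=.
apply: leq_trans (immax (Ordinal i'k) isT). apply: subset_leq_card. by rewrite subsetI HFk.
Qed.

Unset Implicit Arguments.
Fixpoint tr (d j : nat) : Ty (d + j) -> Ty j :=
  match d return Ty (d + j) -> Ty j with
  | 0 => fun x => x
  | d'.+1 => fun x => tr d' j x.1
  end.
Set Implicit Arguments.

Section Iter.
Variable C : forall i : nat, {set Ty i}.

Lemma tr0 j (A : {set Ty (0 + j)}) : tr 0 j @: A = A.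
Proof. apply/setP => x; apply/imsetP/idP => [[y yA ->] //|xA]; by exists x. Qed.

Lemma trS d j (A : {set Ty (d.+1 + j)}) :
  tr d.+1 j @: A = tr d j @: [set x.1 | x in (A : {set Ty (d + j).+1})].
Proof. by rewrite -imset_comp. Qed.

Lemma it_chain d j A :
  (forall e, e < d -> convex (@leT (e + j)) (stage C (e + j)) (C (e + j))) ->
  chain (@leT (d + j)) (stage C (d + j)) A ->
  chain (@leT j) (stage C j) (tr d j @: A).
Proof.
elim: d A => [|d IH] A Hc hA; first by rewrite tr0.
rewrite trS; apply: IH => [e ed|]; first by apply: Hc; apply: ltnW.
exact: (proj_chain (Hc d (ltnSn d)).1 hA).
Qed.

Lemma it_max d j A :
  (forall e, e < d -> convex (@leT (e + j)) (stage C (e + j)) (C (e + j))) ->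
  maxchain (@leT (d + j)) (stage C (d + j)) A ->
  maxchain (@leT j) (stage C j) (tr d j @: A).
Proof.
elim: d A => [|d IH] A Hc hA; first by rewrite tr0.
rewrite trS; apply: IH => [e ed|]; first by apply: Hc; apply: ltnW.
exact: (proj_max (Hc d (ltnSn d)).1 (Hc d (ltnSn d)).2 hA).
Qed.

Lemma it_lift d j A : chain (@leT j) (stage C j) A ->
  exists A', chain (@leT (d + j)) (stage C (d + j)) A' /\ tr d j @: A' = A.
Proof.
elim: d => [|d IH] hA; first by exists A; rewrite tr0.
have [A1 [h1 e1]] := IH hA.
have [A2 [h2 e2]] := lift_chain (C (d + j)) h1.
exists A2; split; first exact: h2.
by rewrite trS e2.
Qed.

End Iter.

Theorem theorem3p24 (n : nat) (C : forall i : nat, {set Ty i}) :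
  (forall i, i < n -> C i != set0 /\ convex (@leT i) (stage C i) (C i)) ->
  shellable (@leT n) (stage C n) ->
  forall i, i < n -> exists x, x \in C i /\ spine (@leT i) (stage C i) x.
Proof.
move=> Hc Hsh i ltin.
apply: NNPP => Hno.
have [d Hn] : exists d, n = d + i.+1 by exists (n - i.+1); rewrite subnK.
subst n.
have Hce : forall e, e < d -> convex (@leT (e + i.+1)) (stage C (e + i.+1)) (C (e + i.+1)).
  move=> e ed; apply: (Hc _ _).2; by rewrite ltn_add2r.
have [Cne Ci] := Hc i ltin.
pose N := d + i.+1.
pose q := tr d i.+1.
pose p := fun x : Ty N => (q x).1.
have pE : forall A : {set Ty N}, p @: A = fst @: (q @: A).
  by move=> A; rewrite -imset_comp.
have pchain : forall A, chain (@leT N) (stage C N) A -> chain (@leT i) (stage C i) (p @: A).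
  move=> A hA; rewrite pE; apply: (proj_chain Ci.1); exact: it_chain Hce hA.
have pmax : forall A, maxchain (@leT N) (stage C N) A -> maxchain (@leT i) (stage C i) (p @: A).
  move=> A hA; rewrite pE; apply: (proj_max Ci.1 Ci.2); exact: it_max Hce hA.
have plift : forall A, chain (@leT i) (stage C i) A ->
    exists A', chain (@leT N) (stage C N) A' /\ p @: A' = A.
  move=> A hA. have [A1 [h1 e1]] := lift_chain (C i) hA.
  have [A2 [h2 e2]] := it_lift d h1. exists A2; split => //. by rewrite pE e2.
have [A0 [A0c A0max]] := ex_maxlen (stage C i).
pose m := #|A0|.
pose Zb := fun A : {set Ty N} => #|p @: A| == m.
pose Xb := fun A : {set Ty N} => [exists x in A, p x \in C i].
have exX : exists F, maxchain (@leT N) (stage C N) F /\ Xb F.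
  case/set0Pn: Cne => c cC.
  have : chain (@leT i) (stage C i) [set c].
    split; first by rewrite sub1set (subsetP Ci.1).
    by move=> x y; rewrite !in_set1 => /eqP-> /eqP->; rewrite leT_refl.
  case/plift => A' [hA' eA']. have [F [hF sF]] := ext_max hA'.
  exists F; split => //. have : c \in p @: A' by rewrite eA' set11.
  case/imsetP => x xA cE. apply/existsP; exists x; by rewrite (subsetP sF _ xA) -cE cC.
have exZ : exists F, maxchain (@leT N) (stage C N) F /\ Zb F.
  case/plift: A0c => A' [hA' eA']. have [F [hF sF]] := ext_max hA'.
  exists F; split => //. rewrite /Zb eqn_leq A0max /=; last by apply: pchain; case: hF.
  rewrite /m -eA'. apply: subset_leq_card; exact: imsetS.
have disj : forall F, maxchain (@leT N) (stage C N) F -> Zb F -> Xb F -> False.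
  move=> F hF /eqP hZ /existsP[x /andP[xF pxC]].
  apply: Hno; exists (p x); split => //; exists (p @: F); split; last exact: imset_f.
  split; first by apply: pchain; case: hF.
  by move=> B hB; rewrite hZ; apply: A0max.
have vert : forall F, maxchain (@leT N) (stage C N) F -> Xb F ->
    exists y z, [/\ y != z, y \in F, z \in F & (p y \in C i) && (p z \in C i)].
  move=> F hF /existsP[x /andP[xF pxC]].
  have hq := it_max Hce hF.
  have [c [cC c0 c1]] := vertical Ci.1 Ci.2 hq (ex_intro2 _ _ (q x) (imset_f q xF) pxC).
  case/imsetP: c0 => y yF ey. case/imsetP: c1 => z zF ez.
  exists y, z; split => //.
    apply/eqP => yz; rewrite yz -ez in ey; by case: ey.
  by rewrite /p /q -ey -ez cC.
have closed : forall G F, maxchain (@leT N) (stage C N) G -> maxchain (@leT N) (stage C N) F ->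
    Zb G -> #|G :&: F| = #|G| - 1 -> Zb F.
  move=> G F hG hF /eqP hZ hGF.
  have hpF := pmax F hF.
  have le1 : #|p @: F| <= m by apply: A0max; case: hpF.
  have h1 : #|p @: (G :\: F)| <= 1.
    apply: leq_trans (leq_imset_card _ _) _. rewrite cardsD hGF; clear; lia.
  have h2 : m <= #|p @: (G :&: F)| + 1.
    rewrite -hZ -{1}(setID G F) imsetU cardsU. lia.
  have sub1 : p @: (G :&: F) \subset p @: F by apply: imsetS; exact: subsetIr.
  have h3 : #|p @: (G :&: F)| <= #|p @: F| by exact: subset_leq_card.
  rewrite /Zb eqn_leq le1 /= leqNgt; apply/negP => lt.
  have eq1 : p @: (G :&: F) = p @: F.
    apply/eqP; rewrite eqEcard sub1 /=. lia.
  have sub2 : p @: F \subset p @: G by rewrite -eq1; apply: imsetS; exact: subsetIl.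
  have e := hpF.2 _ (pchain G hG.1) sub2.
  by rewrite -e hZ ltnn in lt.
case: Hsh => Fl hS. have [Funiq [FP _]] := hS.
have inF : forall A, maxchain (@leT N) (stage C N) A -> A \in Fl by move=> A /FP.
have mF : forall j, j < size Fl -> maxchain (@leT N) (stage C N) (nth set0 Fl j).
  by move=> j js; apply/FP; apply: mem_nth.
have sz0 : 0 < size Fl by case: exX => F [hF _]; move: (inF F hF); case: (Fl).
case Z0: (Zb (nth set0 Fl 0)).
- have hasX : has Xb Fl.
    case: exX => F [hF XF]; apply/hasP; exists F => //; exact: inF.
  set j := find Xb Fl.
  have js : j < size Fl by rewrite -has_find.
  have Xj : Xb (nth set0 Fl j) := nth_find set0 hasX.
  have j0 : 0 < j.
    rewrite lt0n; apply/eqP => e. rewrite e in Xj. exact: (disj _ (mF 0 sz0) Z0 Xj).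
  have hj : 0 < j < size Fl by rewrite j0 js.
  have [i0 i0j hadj] := shell_adj hS hj.
  have nX : Xb (nth set0 Fl i0) = false := before_find set0 i0j.
  have [y [z [yz yF zF /andP[py pz]]]] := vert _ (mF j js) Xj.
  have yn : y \notin nth set0 Fl i0.
    apply/negP => yi; move/negbT: nX => /negP; apply; apply/existsP; exists y; by rewrite yi py.
  have zn : z \notin nth set0 Fl i0.
    apply/negP => zi; move/negbT: nX => /negP; apply; apply/existsP; exists z; by rewrite zi pz.
  have : #|y |: (z |: (nth set0 Fl j :&: nth set0 Fl i0))| <= #|nth set0 Fl j|.
    apply: subset_leq_card; apply/subsetP => u; rewrite !in_setU1 inE.
    by case/or3P => [/eqP->|/eqP->|/andP[]].
  rewrite !cardsU1 in_setU1 !in_setI (negbTE yz) (negbTE yn) (negbTE zn) !andbF /= hadj.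
  move=> H; clear -H; lia.
- have hasZ : has Zb Fl.
    case: exZ => F [hF ZF]; apply/hasP; exists F => //; exact: inF.
  set k := find Zb Fl.
  have ks : k < size Fl by rewrite -has_find.
  have Zk : Zb (nth set0 Fl k) := nth_find set0 hasZ.
  have k0 : 0 < k.
    rewrite lt0n; apply/eqP => e. by rewrite e Z0 in Zk.
  have hk : 0 < k < size Fl by rewrite k0 ks.
  have [i0 i0k hadj] := shell_adj hS hk.
  have nZ : Zb (nth set0 Fl i0) = false := before_find set0 i0k.
  have := closed _ _ (mF k ks) (mF i0 (ltn_trans i0k ks)) Zk hadj.
  by rewrite nZ.
Qed.
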